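(* Let $(b_1,b_2)$ and $(\tilde b_1,\tilde b_2)$ be real pairs with $b_1\ne1$, $\tilde b_1\ne1$, $(b_1,b_2)\ne(0,0)$, $(\tilde b_1,\tilde b_2)\ne(0,0)$. Then $\Gamma_c^2(b_1,b_2)$ is linearly equivalent to $\Gamma_c^2(\tilde b_1,\tilde b_2)$ if and only if $b_1=\tilde b_1$ and $b_2=\pm\tilde b_2$. Moreover the Ricci tensor of $\Gamma_c^2(b_1,b_2)$ is positive definite if $b_1>1$ and indefinite if $b_1<1$.
   Context: A torsion-free connection has Christoffel symbols $\nabla_{\partial_{x^i}}\partial_{x^j}=\Gamma_{ij}^k\partial_{x^k}$; curvature $R(X,Y)Z=\nabla_X\nabla_YZ-\nabla_Y\nabla_XZ-\nabla_{[X,Y]}Z$, Ricci tensor $\rho(Y,Z)=\mathrm{Tr}(X\mapsto R(X,Y)Z)$. For real constants, $\Gamma(a,b,c,d,e,f)$ denotes the connection on $\mathbb R^2$ with constant Christoffel symbols $\Gamma_{11}^1=a$, $\Gamma_{11}^2=b$, $\Gamma_{12}^1=\Gamma_{21}^1=c$, $\Gamma_{12}^2=\Gamma_{21}^2=d$, $\Gamma_{22}^1=e$, $\Gamma_{22}^2=f$. For $b_1\ne1$, $\Gamma_c^2(b_1,b_2):=\Gamma(1+b_1,0,b_2,1,\frac{1+b_2^2}{b_1-1},0)$. Two such connections are linearly equivalent if there is $T\in GL(2,\mathbb R)$ with $T^*\nabla_2=\nabla_1$. *)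

(* Defs.v *)
From Stdlib Require Import Reals Lra.
Open Scope R_scope.

Inductive idx : Set := I1 | I2.

Definition sum2 (f : idx -> R) : R := f I1 + f I2.

(* Constant Christoffel symbols: chr G i j k = Gamma_{ij}^k. *)
Definition chr := idx -> idx -> idx -> R.

Definition Gam (a b c d e f : R) : chr := fun i j k =>
  match i, j, k with
  | I1, I1, I1 => a
  | I1, I1, I2 => b
  | I1, I2, I1 => c
  | I2, I1, I1 => c
  | I1, I2, I2 => d
  | I2, I1, I2 => d
  | I2, I2, I1 => e
  | I2, I2, I2 => f
  end.

Definition Gc2 (b1 b2 : R) : chr :=
  Gam (1 + b1) 0 b2 1 ((1 + b2 ^ 2) / (b1 - 1)) 0.

(* A linear map T of R^2, given by its matrix: mat T a i = T^a_i,
   i.e. T(d_i) = sum_a T^a_i d_a. *)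
Record lin2 := { t11 : R; t12 : R; t21 : R; t22 : R }.

Definition mat (T : lin2) : idx -> idx -> R := fun a i =>
  match a, i with
  | I1, I1 => t11 T | I1, I2 => t12 T
  | I2, I1 => t21 T | I2, I2 => t22 T
  end.

Definition det2 (T : lin2) : R := t11 T * t22 T - t12 T * t21 T.

(* Inverse matrix (meaningful when det2 T <> 0). *)
Definition matinv (T : lin2) : idx -> idx -> R := fun a i =>
  match a, i with
  | I1, I1 => t22 T / det2 T | I1, I2 => - t12 T / det2 T
  | I2, I1 => - t21 T / det2 T | I2, I2 => t11 T / det2 T
  end.

(* Christoffel symbols of the pulled-back connection T^* nabla, where
   (T^* nabla)_X Y = T^{-1}_* (nabla_{T_* X} T_* Y):
   (T^*G)_{ij}^k = sum_{a,b,c} T^a_i T^b_j G_{ab}^c (T^{-1})^k_c. *)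
Definition pullback (T : lin2) (G : chr) : chr := fun i j k =>
  sum2 (fun a => sum2 (fun b => sum2 (fun c =>
    mat T a i * mat T b j * G a b c * matinv T k c))).

Definition lin_equiv (G1 G2 : chr) : Prop :=
  exists T : lin2, det2 T <> 0 /\ forall i j k, pullback T G2 i j k = G1 i j k.

(* Curvature for constant Christoffel symbols (all derivatives vanish):
   R(d_i,d_j)d_k = sum_m curv G i j k m d_m. *)
Definition curv (G : chr) (i j k m : idx) : R :=
  sum2 (fun l => G j k l * G i l m - G i k l * G j l m).

(* Ricci tensor rho(d_j, d_k) = Tr(X |-> R(X,d_j)d_k). *)
Definition ricci (G : chr) (j k : idx) : R := sum2 (fun i => curv G i j k i).

Definition vec2 (v1 v2 : R) : idx -> R := fun i =>
  match i with I1 => v1 | I2 => v2 end.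

Definition qform (B : idx -> idx -> R) (v : idx -> R) : R :=
  sum2 (fun j => sum2 (fun k => B j k * v j * v k)).

Definition pos_def (B : idx -> idx -> R) : Prop :=
  forall v1 v2 : R, (v1, v2) <> (0, 0) -> qform B (vec2 v1 v2) > 0.

Definition indefinite (B : idx -> idx -> R) : Prop :=
  (exists v1 v2 : R, qform B (vec2 v1 v2) > 0) /\
  (exists w1 w2 : R, qform B (vec2 w1 w2) < 0).

(* Main.v *)
Require Import Defs.
From Stdlib Require Import Reals Lra.
Open Scope R_scope.
Lemma qf (b1 b2 v1 v2 : R) : qform (ricci (Gc2 b1 b2)) (vec2 v1 v2) =
  b1*v1*v1 + 2*b2*v1*v2 + ((1 + b2 ^ 2) / (b1 - 1) * b1 - b2*b2)*v2*v2.
Proof. unfold qform, ricci, curv, sum2, Gc2, Gam, vec2. ring. Qed.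
Lemma posdef (b1 b2 : R) : b1 > 1 -> pos_def (ricci (Gc2 b1 b2)).
Proof.
  intros h v1 v2 hv. rewrite qf.
  set (e := (1 + b2 ^ 2) / (b1 - 1)).
  assert (He : e * (b1 - 1) = 1 + b2 * b2) by (unfold e; field; lra).
  assert (K : e*b1*b1 - b2*b2 - b1*b2*b2 > 0).
  { assert ((e*b1*b1 - b2*b2 - b1*b2*b2)*(b1-1) = b1*b1+b2*b2) by nra.
    assert (b1*b1+b2*b2 > 0) by nra.
    destruct (Rlt_le_dec 0 (e*b1*b1 - b2*b2 - b1*b2*b2)); auto. nra. }
  assert (b1 * (b1*v1*v1 + 2*b2*v1*v2 + (e*b1 - b2*b2)*v2*v2) =
          (b1*v1+b2*v2)^2 + v2*v2*(e*b1*b1 - b2*b2 - b1*b2*b2)) by ring.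
  destruct (Req_dec v2 0).
  - subst v2. assert (v1 <> 0) by (intro; subst; apply hv; reflexivity).
    assert (v1*v1>0) by (destruct (Rlt_le_dec 0 v1); [nra| destruct (Rle_lt_or_eq_dec _ _ r); [nra|congruence]]).
    assert (b1*(v1*v1)>0) by nra. nra.
  - assert (v2*v2 > 0) by (destruct (Rlt_le_dec 0 v2); [nra| destruct (Rle_lt_or_eq_dec _ _ r); [nra|congruence]]).
    assert (0 <= (b1*v1+b2*v2)^2) by (apply pow2_ge_0).
    assert (v2*v2*(e*b1*b1 - b2*b2 - b1*b2*b2) > 0) by (apply Rmult_lt_0_compat; lra).
    assert (b1 * (b1*v1*v1 + 2*b2*v1*v2 + (e*b1 - b2*b2)*v2*v2) > 0) by lra.
    destruct (Rlt_le_dec 0 (b1*v1*v1 + 2*b2*v1*v2 + (e*b1 - b2*b2)*v2*v2)); auto. nra.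
Qed.
Lemma indef (b1 b2 : R) : (b1, b2) <> (0,0) -> b1 < 1 -> indefinite (ricci (Gc2 b1 b2)).
Proof.
  intros hb h. unfold indefinite.
  set (e := (1 + b2 ^ 2) / (b1 - 1)).
  assert (Q : forall v1 v2, qform (ricci (Gc2 b1 b2)) (vec2 v1 v2) =
    b1*v1*v1 + 2*b2*v1*v2 + (e * b1 - b2*b2)*v2*v2) by (intros; rewrite qf; reflexivity).
  setoid_rewrite Q.
  assert (He : e * (b1 - 1) = 1 + b2 * b2) by (unfold e; field; lra).
  assert (K : e*b1*b1 - b2*b2 - b1*b2*b2 < 0).
  { assert ((e*b1*b1 - b2*b2 - b1*b2*b2)*(b1-1) = b1*b1+b2*b2) by nra.
    assert (b1*b1+b2*b2 > 0).
    { destruct (Req_dec b1 0). subst. assert (b2 <> 0) by (intro; subst; apply hb; reflexivity). nra. nra. }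
    destruct (Rlt_le_dec (e*b1*b1 - b2*b2 - b1*b2*b2) 0); auto. nra. }
  destruct (Rtotal_order b1 0) as [h0|[h0|h0]].
  - split. exists (-b2), b1. nra. exists 1, 0. nra.
  - subst b1. assert (b2 <> 0) by (intro; subst; apply hb; reflexivity).
    split. exists b2, 1. nra. exists 0, 1. nra.
  - split. exists 1, 0. nra. exists (-b2), b1. nra.
Qed.
Lemma key (T : lin2) (G1 G2 : chr) (hd : det2 T <> 0)
  (H : forall i j k, pullback T G2 i j k = G1 i j k) (i j c : idx) :
  sum2 (fun a => sum2 (fun b => mat T a i * mat T b j * G2 a b c)) =
  sum2 (fun k => G1 i j k * mat T c k).
Proof.
  unfold sum2 at 3. rewrite <- (H i j I1), <- (H i j I2).
  destruct T as [p q r w]; unfold det2 in hd; simpl in hd.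
  destruct i, j, c; unfold pullback, sum2, mat, matinv, det2; simpl; field; auto.
Qed.

Lemma fwd (b1 b2 c1 c2 : R) (hb1 : b1 <> 1) (hc1 : c1 <> 1) :
  lin_equiv (Gc2 b1 b2) (Gc2 c1 c2) -> b1 = c1 /\ (b2 = c2 \/ b2 = - c2).
Proof.
  intros [T [hd H]].
  pose proof (key T _ _ hd H I1 I1 I1) as E111.
  pose proof (key T _ _ hd H I1 I1 I2) as E112.
  pose proof (key T _ _ hd H I1 I2 I1) as E121.
  pose proof (key T _ _ hd H I1 I2 I2) as E122.
  pose proof (key T _ _ hd H I2 I2 I1) as E221.
  pose proof (key T _ _ hd H I2 I2 I2) as E222.
  destruct T as [p q r w]; unfold det2 in hd; simpl in hd.
  unfold sum2, mat, Gc2, Gam in *; simpl in *.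
  clear H.
  set (e2 := (1 + c2 * (c2 * 1)) / (c1 - 1)) in *.
  set (e1 := (1 + b2 * (b2 * 1)) / (b1 - 1)) in *.
  assert (He2 : e2 * (c1 - 1) = 1 + c2 * c2) by (unfold e2; field; lra).
  assert (He1 : e1 * (b1 - 1) = 1 + b2 * b2) by (unfold e1; field; lra).
  clearbody e1 e2.
  assert (hr : r = 0).
  { destruct (Req_dec r 0) as [|nr]; auto. exfalso.
    assert (h2 : 1 + b1 = 2 * p).
    { apply (Rmult_eq_reg_r r); auto. lra. }
    assert (h3 : (c1-1)*p*p + 2*c2*p*r + e2*r*r = 0) by nra.
    assert (h4 : ((c1-1)*p + c2*r)^2 + r*r = 0).
    { replace (((c1-1)*p + c2*r)^2 + r*r) with ((c1-1)*((c1-1)*p*p + 2*c2*p*r + e2*r*r)) by nra.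
      rewrite h3; ring. }
    assert (0 <= ((c1-1)*p + c2*r)^2) by apply pow2_ge_0.
    assert (r*r > 0) by (destruct (Rlt_le_dec 0 r); [nra| destruct (Rle_lt_or_eq_dec _ _ r0); [nra|congruence]]).
    lra. }
  subst r.
  assert (hp : p <> 0) by (intro; subst; apply hd; ring).
  assert (hw : w <> 0) by (intro; subst; apply hd; ring).
  assert (p1 : p = 1) by (apply (Rmult_eq_reg_r w); auto; lra).
  subst p.
  assert (hq : q = 0) by (apply (Rmult_eq_reg_r (2*w)); [lra| intro; apply hw; lra]).
  subst q.
  assert (hbc : b1 = c1) by lra. subst c1.
  assert (hb2 : b2 = w * c2) by lra.
  assert (hw2 : w * w * e2 = e1) by lra.
  assert (hww : w * w = 1).
  { assert (w*w*(1+c2*c2) = 1 + b2*b2).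
    { rewrite <- He1, <- hw2, <- He2. ring. }
    subst b2. nra. }
  split; auto.
  assert ((w-1)*(w+1) = 0) by nra.
  destruct (Rmult_integral _ _ H) as [h|h].
  - left. replace w with 1 in hb2 by lra. lra.
  - right. replace w with (-1) in hb2 by lra. lra.
Qed.
Lemma bwd (b1 b2 c1 c2 : R) (hc1 : c1 <> 1) :
  b1 = c1 /\ (b2 = c2 \/ b2 = - c2) -> lin_equiv (Gc2 b1 b2) (Gc2 c1 c2).
Proof.
  intros [-> [-> | ->]].
  - exists {| t11 := 1; t12 := 0; t21 := 0; t22 := 1 |}.
    split. unfold det2; simpl; lra.
    intros i j k; destruct i, j, k; unfold pullback, sum2, mat, matinv, det2, Gc2, Gam; simpl;
      field; lra.
  - exists {| t11 := 1; t12 := 0; t21 := 0; t22 := -1 |}.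
    split. unfold det2; simpl; lra.
    intros i j k; destruct i, j, k; unfold pullback, sum2, mat, matinv, det2, Gc2, Gam; simpl;
      field; lra.
Qed.

Theorem mainTheorem16 (b1 b2 c1 c2 : R)
  (hb1 : b1 <> 1) (hc1 : c1 <> 1)
  (hb : (b1, b2) <> (0, 0)) (hc : (c1, c2) <> (0, 0)) :
  (lin_equiv (Gc2 b1 b2) (Gc2 c1 c2) <-> (b1 = c1 /\ (b2 = c2 \/ b2 = - c2))) /\
  (b1 > 1 -> pos_def (ricci (Gc2 b1 b2))) /\
  (b1 < 1 -> indefinite (ricci (Gc2 b1 b2))).
Proof.
  split; [split; [apply fwd; auto | apply bwd; auto]|].
  split; [apply posdef | apply indef; auto].
Qed.
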